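(* Consider the following setting. $\mathcal{S}$ is a state space, $\mathcal{A}$ a finite action space, $\rho$ a distribution on $\mathcal{S}$, $\pi_{\mathrm{ref}}$ a policy with $\pi_{\mathrm{ref}}(a|s)>0$ for all $(s,a)$, $\beta>0$, $R>0$, and $r^*:\mathcal{S}\times\mathcal{A}\to[0,R]$ is the ground-truth reward. Let $\Pi$ be a finite policy class such that (I) $\pi^*_{r^*}\in\Pi$ and (II) for every $\pi\in\Pi$ and all $(s,a)$, $|\log(\pi(a|s)/\pi_{\mathrm{ref}}(a|s))|\le R/\beta$. Let $r^1,\dots,r^W:\mathcal{S}\times\mathcal{A}\to[0,R]$ be reward functions. Then for every policy $\pi\in\mathrm{conv}(\Pi)\cup\{\pi^*_{r^w}\}_{w=1}^W$, $$\mathrm{Cov}^{\pi^*_{r^*}|\pi}\le 1+\kappa\big(e^{2R/\beta}\big)\cdot\frac{J_\beta(\pi^*_{r^*})-J_\beta(\pi)}{\beta},$$ where $\kappa(x):=\frac{(x-1)^2}{x-1-\log x}$ (and $\kappa(x)=O(x)$).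
   Context: For a reward $r$, $\pi^*_r(a|s):=\pi_{\mathrm{ref}}(a|s)e^{r(s,a)/\beta}/\sum_{a'}\pi_{\mathrm{ref}}(a'|s)e^{r(s,a')/\beta}$. The regularized value is $J_\beta(\pi):=\mathbb{E}_{s\sim\rho}\big[\mathbb{E}_{a\sim\pi(\cdot|s)}[r^*(s,a)]-\beta\,\mathrm{KL}(\pi(\cdot|s)\|\pi_{\mathrm{ref}}(\cdot|s))\big]$. The coverage coefficient is $\mathrm{Cov}^{\tilde\pi|\pi}:=\mathbb{E}_{s\sim\rho,a\sim\tilde\pi(\cdot|s)}\big[\tilde\pi(a|s)/\pi(a|s)\big]$. $\mathrm{conv}(\Pi)$ is the set of all finite convex combinations $\sum_i\lambda_i\pi^i$ ($\lambda_i\ge0$, $\sum_i\lambda_i=1$, $\pi^i\in\Pi$), taken pointwise in $(a|s)$. *)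

(* Defs.v *)
From Stdlib Require List.
From HB Require Import structures.
From mathcomp Require Import all_boot all_order all_algebra.
From mathcomp Require Import all_classical all_reals all_analysis.
Set Implicit Arguments. Unset Strict Implicit. Unset Printing Implicit Defensive.
Import Order.TTheory GRing.Theory Num.Theory.
Local Open Scope ring_scope.

Section Defs.
Context {R : realType} {d : measure_display} {S : measurableType d} {A : finType}.

Definition is_policy (pi : S -> A -> R) : Prop :=
  forall s, (forall a, 0 <= pi s a) /\ \sum_(a : A) pi s a = 1.

Definition pistar (piref : S -> A -> R) (beta : R) (r : S -> A -> R) : S -> A -> R :=
  fun s a => piref s a * expR (r s a / beta) /
             \sum_(a' : A) piref s a' * expR (r s a' / beta).

Definition KL (p q : S -> A -> R) (s : S) : R :=
  \sum_(a : A) p s a * ln (p s a / q s a).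

Definition Jbeta (rho : probability S R) (rstar piref : S -> A -> R) (beta : R)
  (pi : S -> A -> R) : \bar R :=
  (\int[rho]_s (\sum_(a : A) pi s a * rstar s a - beta * KL pi piref s)%:E)%E.

Definition Cov (rho : probability S R) (pit pi : S -> A -> R) : \bar R :=
  (\int[rho]_s (\sum_(a : A) pit s a * (pit s a / pi s a))%:E)%E.

Definition conv_pol (Pi : seq (S -> A -> R)) (pi : S -> A -> R) : Prop :=
  exists (n : nat) (lam : 'I_n -> R) (p : 'I_n -> S -> A -> R),
    [/\ forall i, 0 <= lam i,
        \sum_(i < n) lam i = 1,
        forall i, List.In (p i) Pi
      & pi = fun s a => \sum_(i < n) lam i * p i s a].

End Defs.

Definition kappa {R : realType} (x : R) : R := (x - 1) ^+ 2 / (x - 1 - ln x).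

(* Main.v *)
Require Import Defs.
From Stdlib Require List.
From HB Require Import structures.
From mathcomp Require Import all_boot all_order all_algebra.
From mathcomp Require Import all_classical all_reals all_analysis.
From mathcomp Require Import ring lra measurable_realfun.
Import Order.TTheory GRing.Theory Num.Theory.
Local Open Scope ring_scope.

Section S.
Import numFieldNormedType.Exports.
Local Open Scope classical_set_scope.
Local Open Scope ring_scope.
Context {R : realType}.
Implicit Types (f g : R -> R) (x df dg : R).
Lemma dD f g x df dg : is_derive x 1 f df -> is_derive x 1 g dg ->
  is_derive x 1 (fun t => f t + g t) (df + dg).
Proof. move=> hf hg; exact: (@is_deriveD _ _ _ f g x 1 df dg hf hg). Qed.
Lemma dN f x df : is_derive x 1 f df -> is_derive x 1 (fun t => - f t) (- df).
Proof. move=> hf; exact: (@is_deriveN _ _ _ f x 1 df hf). Qed.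
Lemma dM f g x df dg : is_derive x 1 f df -> is_derive x 1 g dg ->
  is_derive x 1 (fun t => f t * g t) (f x * dg + g x * df).
Proof. move=> hf hg; exact: (@is_deriveM _ _ f g x 1 df dg hf hg). Qed.
Lemma dI x : is_derive x 1 (fun t : R => t) 1.
Proof. exact: (@is_derive_id _ R^o x 1). Qed.
Lemma dC x (c : R) : is_derive x 1 (fun t : R => c) 0.
Proof. exact: (@is_derive_cst _ R^o R^o c x 1). Qed.
Lemma dL x : 0 < x -> is_derive x 1 (@ln R) x^-1.
Proof. move=> h; exact: is_derive1_ln. Qed.
Lemma dV f x df : f x != 0 -> is_derive x 1 f df ->
  is_derive x 1 (fun t => (f t)^-1) (- (f x) ^- 2 * df).
Proof.
move=> h hf; apply: DeriveDef.
  apply: derivableV => //; exact: ex_derive.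
by rewrite deriveV // derive_val.
Qed.

Lemma nonincr (f df : R -> R) (c a b : R) : c < a -> a <= b ->
  (forall x, c < x -> is_derive x 1 f (df x)) ->
  (forall x, a < x < b -> df x <= 0) -> f b <= f a.
Proof.
move=> ca ab hd hn.
case: (eqVneq a b) => [->//|neq].
have ab' : a < b by rewrite lt_neqAle neq ab.
have cont : {within `[a, b], continuous f}.
  apply: derivable_within_continuous => z; rewrite in_itv /= => /andP[az _].
  apply: ex_derive; apply: hd; exact: lt_le_trans ca az.
have hd' : forall z, z \in `]a, b[%R -> is_derive z 1 f (df z).
  move=> z; rewrite in_itv /= => /andP[az _]; apply: hd; exact: lt_trans ca az.
have [z zin eq] := MVT ab' hd' cont.
have : df z * (b - a) <= 0.
  rewrite mulr_le0_ge0 //; last by rewrite subr_ge0.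
  by apply: hn; move: zin; rewrite in_itv.
rewrite -eq subr_le0 //.
Qed.

Arguments dD {f g x df dg}.
Arguments dN {f x df}.
Arguments dM {f g x df dg}.
Arguments dV {f x df}.
Arguments dL {x}.
Definition kf (t : R) := 2 * (t - 1 - ln t) - (t - 1) * (t - 1).

Lemma kf_decr (a b : R) : 0 < a -> a <= b -> kf b <= kf a.
Proof.
move=> a0 ab.
apply: (@nonincr kf (fun x => 2 * ((1 + 0) + - x^-1) + ((x + -1) + - ln x) * 0
   + - ((x + -1) * (1 + 0) + (x + -1) * (1 + 0))) 0 a b a0 ab).
  move=> x x0.
  have h1 := dD (dI x) (dC x (-1)).
  have h2 := dD h1 (dN (dL x0)).
  have h3 := dM (dC x 2) h2.
  exact: dD h3 (dN (dM h1 h1)).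
move=> x /andP[ax _].
have x0 : 0 < x by exact: lt_trans a0 ax.
have e : 2 * ((1 + 0) + - x^-1) + ((x + -1) + - ln x) * 0
   + - ((x + -1) * (1 + 0) + (x + -1) * (1 + 0)) = - 2 * ((x - 1) * (x - 1)) / x.
  by field; rewrite gt_eqF.
rewrite e; apply: mulr_le0_ge0; last by rewrite invr_ge0 ltW.
by rewrite mulNr oppr_le0 mulr_ge0 // -expr2 sqr_ge0.
Qed.

Arguments kf_decr {a b}.
Definition Nf (t : R) := - t + t^-1 + 2 * ln t.

Lemma Nf_le0 (b : R) : 1 <= b -> Nf b <= 0.
Proof.
move=> b1.
have -> : 0 = Nf 1 by rewrite /Nf ln1 invr1; lra.
apply: (@nonincr Nf (fun x => - 1 + - (x ^- 2) * 1 + (2 * x^-1 + ln x * 0)) 0 1 b ltr01 b1).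
  move=> x x0.
  have hV := dV (lt0r_neq0 x0) (dI x).
  exact: dD (dD (dN (dI x)) hV) (dM (dC x 2) (dL x0)).
move=> x /andP[x1 _].
have x0 : 0 < x by exact: lt_trans ltr01 x1.
have e : - 1 + - (x ^- 2) * 1 + (2 * x^-1 + ln x * 0) = - ((x - 1) * (x - 1)) / (x * x).
  by field; rewrite gt_eqF.
rewrite e; apply: mulr_le0_ge0; last by rewrite invr_ge0 mulr_ge0 // ltW.
by rewrite oppr_le0 -expr2 sqr_ge0.
Qed.

Definition mf (t : R) := (t - 1 - ln t) * ((t - 1) * (t - 1))^-1.

Lemma mf_decr (a b : R) : 1 < a -> a <= b -> mf b <= mf a.
Proof.
move=> a1 ab.
apply: (@nonincr mf (fun x => ((x + -1) + - ln x) *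
    (- ((x + -1) * (x + -1)) ^- 2 * ((x + -1) * (1 + 0) + (x + -1) * (1 + 0)))
    + ((x + -1) * (x + -1))^-1 * ((1 + 0) + - x^-1)) 1 a b a1 ab).
  move=> x x1.
  have x0 : 0 < x by exact: lt_trans ltr01 x1.
  have h1 := dD (dI x) (dC x (-1)).
  have h2 := dD h1 (dN (dL x0)).
  have nz : (x + -1) * (x + -1) != 0 by rewrite mulf_neq0 // subr_eq0 gt_eqF.
  exact: dM h2 (@dV (fun t => (t + -1) * (t + -1)) x _ nz (dM h1 h1)).
move=> x /andP[ax _].
have x1 : 1 < x by exact: lt_trans a1 ax.
have x0 : 0 < x by exact: lt_trans ltr01 x1.
have xn1 : x - 1 != 0 by rewrite subr_eq0 gt_eqF.
have e : ((x + -1) + - ln x) *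
    (- ((x + -1) * (x + -1)) ^- 2 * ((x + -1) * (1 + 0) + (x + -1) * (1 + 0)))
    + ((x + -1) * (x + -1))^-1 * ((1 + 0) + - x^-1) = Nf x / ((x - 1) ^+ 3).
  by rewrite /Nf; field; rewrite xn1 gt_eqF.
rewrite e; apply: mulr_le0_ge0; first exact: Nf_le0 (ltW x1).
by rewrite invr_ge0 exprn_ge0 // subr_ge0 ltW.
Qed.

Arguments mf_decr {a b}.


Lemma key (x t : R) : 1 < x -> 0 < t -> t <= x ->
  (t - 1) ^+ 2 <= kappa x * (t - 1 - ln t).
Proof.
move=> x1 t0 tx.
have kx : kf x <= kf 1 := kf_decr ltr01 (ltW x1).
have k1 : kf 1 = 0 by rewrite /kf ln1; lra.
rewrite k1 /kf in kx.
have sx : 0 < (x - 1) * (x - 1) by apply: mulr_gt0; lra.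
have px : 0 < x - 1 - ln x.
  pose y := Num.sqrt x.
  have y0 : 0 < y by rewrite /y sqrtr_gt0; lra.
  have yy : y * y = x by rewrite /y -expr2 sqr_sqrtr //; lra.
  have y1 : 1 < y by nra.
  have lnx : ln x = ln y + ln y by rewrite -yy lnM // posrE.
  have ly : ln y <= y - 1.
    have := @le_ln1Dx R (y - 1); rewrite addrCA subrr addr0; apply; lra.
  have : 0 < (y - 1) * (y - 1) by apply: mulr_gt0; lra.
  nra.
rewrite /kappa.
case: (lerP t 1) => [t1|t1].
  have kt : kf 1 <= kf t := kf_decr t0 t1.
  rewrite k1 /kf in kt.
  have k2 : 2 <= (x - 1) ^+ 2 / (x - 1 - ln x).
    by rewrite ler_pdivlMr // expr2; lra.
  have st : 0 <= (t - 1) * (t - 1) by rewrite -expr2 sqr_ge0.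
  have pt : 0 <= t - 1 - ln t by lra.
  have := ler_wpM2r pt k2. rewrite !expr2. lra.
have mt := mf_decr t1 tx.
rewrite /mf in mt.
have pt1 : 0 < (t - 1) * (t - 1) by nra.
have px1 : 0 < (x - 1) * (x - 1) by nra.
rewrite ler_pdivrMr in mt => //.
rewrite mulrAC ler_pdivlMr in mt => //.
rewrite mulrAC ler_pdivlMr //.
rewrite !expr2. nra.
Qed.
End S.
Section S.
Import numFieldNormedType.Exports.
Local Open Scope classical_set_scope.
Local Open Scope ring_scope.
Context {R : realType} {A : finType}.

Lemma sum_shift (F p q : A -> R) (K : R) : \sum_a p a = \sum_a q a ->
  \sum_a (F a + K * (p a - q a)) = \sum_a F a.
Proof.
move=> e; rewrite big_split /= -mulr_sumr sumrB e subrr mulr0 addr0 //.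
Qed.

Lemma state_ineq (p q ref rr : A -> R) (beta Z x : R) :
  0 < beta -> 0 < Z -> 1 < x ->
  (forall a, 0 < q a) -> (forall a, 0 < ref a) ->
  \sum_a q a = 1 -> \sum_a p a = 1 ->
  (forall a, p a = ref a * expR (rr a / beta) / Z) ->
  (forall a, p a / q a <= x) ->
  \sum_a p a * (p a / q a) <= 1 + kappa x / beta *
    ((\sum_a p a * rr a - beta * \sum_a p a * ln (p a / ref a)) -
     (\sum_a q a * rr a - beta * \sum_a q a * ln (q a / ref a))).
Proof.
move=> b0 Z0 x1 q0 r0 sq sp hp hx.
have p0 : forall a, 0 < p a.
  by move=> a; rewrite hp divr_gt0 // mulr_gt0 // expR_gt0.
pose t a := p a / q a.
have t0 : forall a, 0 < t a by move=> a; rewrite divr_gt0.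
have qt : forall a, q a * t a = p a.
  by move=> a; rewrite /t mulrC divfK // gt_eqF.
have E1 : forall a, ln (p a / ref a) = rr a / beta - ln Z.
  move=> a; have -> : p a / ref a = expR (rr a / beta) / Z.
    by rewrite hp; field; rewrite !gt_eqF.
  by rewrite ln_div ?posrE ?expR_gt0 // expRK.
have E2 : forall a, ln (q a / ref a) = - ln (t a) + (rr a / beta - ln Z).
  move=> a; rewrite -E1 -lnV ?posrE // -lnM ?posrE ?invr_gt0 ?divr_gt0 //.
  by congr ln; rewrite /t invf_div; field; rewrite !gt_eqF.
have S1 : \sum_a p a * (p a / q a) = \sum_a q a * ((t a - 1) * (t a - 1)) + 1.
  rewrite -[X in _ = _ + X]sp -big_split /=.
  rewrite -(@sum_shift (fun a => q a * ((t a - 1) * (t a - 1)) + p a) p q 1) ?sp ?sq //.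
  apply: eq_bigr => a _; rewrite /t; field; by rewrite gt_eqF.
have S2 : (\sum_a p a * rr a - beta * \sum_a p a * ln (p a / ref a)) -
     (\sum_a q a * rr a - beta * \sum_a q a * ln (q a / ref a)) =
     beta * \sum_a q a * (t a - 1 - ln (t a)).
  rewrite !mulr_sumr -!sumrB.
  rewrite -(@sum_shift (fun a => beta * (q a * (t a - 1 - ln (t a)))) p q (beta * ln Z - beta)) ?sp ?sq //.
  apply: eq_bigr => a _; rewrite E1 E2 /t; field; rewrite !gt_eqF //.
have S3 : \sum_a q a * ((t a - 1) * (t a - 1)) <= kappa x * \sum_a q a * (t a - 1 - ln (t a)).
  rewrite mulr_sumr; apply: ler_sum => a _; rewrite [X in _ <= X]mulrCA; apply: ler_wpM2l; first exact: ltW.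
  rewrite -expr2; apply: key => //; exact: hx.
rewrite S1 S2 mulrA divfK ?gt_eqF // addrC lerD2l //.
Qed.
End S.

Section S.
Import numFieldNormedType.Exports.
Local Open Scope classical_set_scope.
Local Open Scope ring_scope.
Context {R : realType} {d : measure_display} {S : measurableType d}.
Implicit Types (f g : S -> R).
Definition mfn f := measurable_fun [set: S] f.

Lemma intb (rho : probability S R) f (M : R) : mfn f -> (forall s, `|f s| <= M) ->
  rho.-integrable [set: S] (EFin \o f).
Proof.
move=> mf fM.
apply: (@le_integrable _ _ _ rho _ measurableT _ (EFin \o cst M)).
- exact/measurable_EFinP.
- by move=> s _ /=; rewrite lee_fin (le_trans (fM s)) // ler_norm.
- exact: finite_measure_integrable_cst.
Qed.

Lemma int_combine (rho : probability S R) (F gs g : S -> R) (c M : R) :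
 mfn F -> mfn gs -> mfn g ->
 (forall s, `|gs s| <= M) -> (forall s, `|g s| <= M) -> 0 <= c ->
 (forall s, 0 <= F s) ->
 (forall s, F s <= 1 + c * (gs s - g s)) ->
 (\int[rho]_s (F s)%:E <= 1%:E + c%:E * (\int[rho]_s (gs s)%:E - \int[rho]_s (g s)%:E))%E.
Proof.
move=> mF mgs mg bgs bg c0 F0 FG.
have bD : forall s, `|gs s - g s| <= M + M.
  by move=> s; apply: le_trans (ler_normB _ _) _; apply: lerD.
have bH : forall s, `|c * (gs s - g s)| <= c * (M + M).
  by move=> s; rewrite normrM ger0_norm // ler_wpM2l.
have mD : mfn (fun s => gs s - g s) by apply: measurable_funB.
have mH : mfn (fun s => c * (gs s - g s)) by apply: measurable_funM => //; exact: measurable_cst.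
have mG : mfn (fun s => 1 + c * (gs s - g s)) by apply: measurable_funD => //; exact: measurable_cst.
apply: (@le_trans _ _ (\int[rho]_s (1 + c * (gs s - g s))%:E)%E).
  apply: ge0_le_integral => //.
  - by move=> s _; rewrite lee_fin.
  - exact/measurable_EFinP.
  - exact/measurable_EFinP.
  - by move=> s _; rewrite lee_fin.
rewrite (@integralD_EFin _ _ _ rho _ measurableT (cst 1) (fun s => c * (gs s - g s))).
- have -> : (\int[rho]_x (EFin \o cst 1%R) x = 1)%E.
    rewrite (_ : EFin \o cst 1%R = cst 1%E) //.
    by rewrite integral_cst // mul1e; apply: probability_setT.
  have iD : rho.-integrable [set: S] (EFin \o (fun s => gs s - g s)) by exact: intb bD.
  have -> : (\int[rho]_x (EFin \o (fun s => (c * (gs s - g s))%R)) x =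
     \int[rho]_x (c%:E * (EFin \o (fun s => (gs s - g s)%R)) x))%E by [].
  rewrite integralZl //.
  have -> : (\int[rho]_x (EFin \o (fun s => (gs s - g s)%R)) x =
     \int[rho]_x ((gs x)%:E - (g x)%:E))%E by [].
  by rewrite integralB_EFin //; [exact: intb bgs | exact: intb bg].
- exact: finite_measure_integrable_cst.
- exact: intb bH.
Qed.
End S.

Section F.
Import numFieldNormedType.Exports.
Local Open Scope classical_set_scope.
Local Open Scope ring_scope.
Context {R : realType} {d : measure_display} {S : measurableType d} {A : finType}.
Implicit Types (f g : S -> R).

Lemma phi_pos (x : R) : 1 < x -> 0 < x - 1 - ln x.
Proof.
move=> x1.
pose y := Num.sqrt x.
have y0 : 0 < y by rewrite /y sqrtr_gt0; lra.
have yy : y * y = x by rewrite /y -expr2 sqr_sqrtr //; lra.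
have y1 : 1 < y by nra.
have lnx : ln x = ln y + ln y by rewrite -yy lnM // posrE.
have ly : ln y <= y - 1.
  have := @le_ln1Dx R (y - 1); rewrite addrCA subrr addr0; apply; lra.
have : 0 < (y - 1) * (y - 1) by apply: mulr_gt0; lra.
nra.
Qed.

Lemma kappa_ge0 (x : R) : 1 < x -> 0 <= kappa x.
Proof.
move=> x1; rewrite /kappa divr_ge0 ?sqr_ge0 //; exact/ltW/phi_pos.
Qed.

Lemma mM f g : mfn f -> mfn g -> mfn (fun s => f s * g s).
Proof. exact: measurable_funM. Qed.
Lemma mD f g : mfn f -> mfn g -> mfn (fun s => f s + g s).
Proof. exact: measurable_funD. Qed.
Lemma mB f g : mfn f -> mfn g -> mfn (fun s => f s - g s).
Proof. exact: measurable_funB. Qed.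
Lemma mC (c : R) : mfn (fun _ : S => c).
Proof. exact: measurable_cst. Qed.
Lemma mExp f : mfn f -> mfn (fun s => expR (f s)).
Proof. move=> h; exact: (measurableT_comp (@measurable_expR R) h). Qed.
Lemma mLn f : mfn f -> mfn (fun s => ln (f s)).
Proof. move=> h; exact: (measurableT_comp (@measurable_ln R) h). Qed.
Lemma mInv f : mfn f -> (forall s, 0 < f s) -> mfn (fun s => (f s)^-1).
Proof.
move=> h p.
have -> : (fun s => (f s)^-1) = (fun s => expR (- ln (f s))).
  apply: funext => s; rewrite -lnV ?posrE // lnK // posrE invr_gt0 //.
apply: mExp; apply: (measurableT_comp (@oppr_measurable R _)); exact: mLn.
Qed.
Lemma mSum (F : A -> S -> R) : (forall a, mfn (F a)) -> mfn (fun s => \sum_(a : A) F a s).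
Proof. move=> h; exact: measurable_sum. Qed.
Lemma mSumI n (F : 'I_n -> S -> R) : (forall a, mfn (F a)) -> mfn (fun s => \sum_(a < n) F a s).
Proof. move=> h; exact: measurable_sum. Qed.

End F.

Section G.
Import numFieldNormedType.Exports.
Local Open Scope classical_set_scope.
Local Open Scope ring_scope.
Context {R : realType} {d : measure_display} {S : measurableType d} {A : finType}.

Definition goodp (piref : S -> A -> R) (m : R) (pi : S -> A -> R) :=
  [/\ forall s, \sum_a pi s a = 1,
      forall s a, piref s a * expR (- m) <= pi s a <= piref s a * expR m
    & forall a, mfn (fun s => pi s a)].

Lemma Z_bounds (piref r : S -> A -> R) (beta Rmax : R) s :
  is_policy piref -> (forall s a, 0 < piref s a) -> 0 < beta ->
  (forall s a, 0 <= r s a <= Rmax) ->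
  1 <= \sum_a piref s a * expR (r s a / beta) <= expR (Rmax / beta).
Proof.
move=> pol pos b0 rb.
have [_ s1] := pol s.
apply/andP; split.
  rewrite -{1}s1; apply: ler_sum => a _.
  rewrite -{1}(mulr1 (piref s a)); apply: ler_wpM2l; first exact: ltW.
  rewrite -expR0 ler_expR divr_ge0 //; [by case/andP: (rb s a) | exact: ltW].
rewrite -[X in _ <= X]mul1r -s1 mulr_suml; apply: ler_sum => a _.
apply: ler_wpM2l; first exact: ltW.
rewrite ler_expR; apply: ler_wpM2r; first by rewrite invr_ge0 ltW.
by case/andP: (rb s a).
Qed.


Lemma good_pistar (piref r : S -> A -> R) (beta Rmax : R) :
  is_policy piref -> (forall s a, 0 < piref s a) ->
  (forall a, mfn (fun s => piref s a)) -> 0 < beta ->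
  (forall s a, 0 <= r s a <= Rmax) -> (forall a, mfn (fun s => r s a)) ->
  goodp piref (Rmax / beta) (pistar piref beta r).
Proof.
move=> pol pos mref b0 rb mr.
have Zp : forall s, 0 < \sum_a piref s a * expR (r s a / beta).
  move=> s; have /andP[Z1 _] := @Z_bounds piref r beta Rmax s pol pos b0 rb.
  exact: lt_le_trans ltr01 Z1.
split.
- move=> s; rewrite /pistar -mulr_suml divff //; exact: lt0r_neq0.
- move=> s a; rewrite /pistar.
  have /andP[Z1 Zm] := @Z_bounds piref r beta Rmax s pol pos b0 rb.
  set Z := \sum_a piref s a * expR (r s a / beta) in Z1 Zm *.
  have /andP[r0 rM] := rb s a.
  have e1 : 1 <= expR (r s a / beta) by rewrite -expR0 ler_expR divr_ge0 // ltW.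
  have e2 : expR (r s a / beta) <= expR (Rmax / beta).
    by rewrite ler_expR; apply: ler_wpM2r => //; rewrite invr_ge0 ltW.
  have Z0 : 0 < Z by exact: lt_le_trans ltr01 Z1.
  have em0 := expR_gt0 (Rmax / beta).
  have uem : (expR (Rmax / beta))^-1 * expR (Rmax / beta) = 1 by rewrite mulVf // gt_eqF.
  have u0 : 0 < (expR (Rmax / beta))^-1 by rewrite invr_gt0.
  have pr0 := ltW (pos s a).
  apply/andP; split; rewrite -mulrA; apply: ler_wpM2l => //.
    rewrite expRN ler_pdivlMr //; nra.
  rewrite ler_pdivrMr //; nra.
- move=> a; rewrite /pistar; apply: mM.
    apply: mM; first exact: mref.
    by apply: mExp; apply: mM; [exact: mr | exact: mC].
  apply: mInv => //; apply: mSum => a'; apply: mM; first exact: mref.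
  by apply: mExp; apply: mM; [exact: mr | exact: mC].
Qed.

Lemma pol_bounds (piref p : S -> A -> R) (m : R) s a :
  0 < piref s a -> 0 < p s a -> `|ln (p s a / piref s a)| <= m ->
  piref s a * expR (- m) <= p s a <= piref s a * expR m.
Proof.
move=> r0 p0; rewrite ler_norml => /andP[l1 l2].
have q0 : 0 < p s a / piref s a by rewrite divr_gt0.
have e : expR (ln (p s a / piref s a)) = p s a / piref s a by rewrite lnK // posrE.
have h1 : expR (- m) <= p s a / piref s a by rewrite -e ler_expR.
have h2 : p s a / piref s a <= expR m by rewrite -e ler_expR.
rewrite ler_pdivlMr // in h1; rewrite ler_pdivrMr // in h2.
by rewrite mulrC h1 mulrC h2.
Qed.

Lemma good_conv (piref : S -> A -> R) (beta Rmax : R) (Pi : seq (S -> A -> R)) pi :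
  (forall s a, 0 < piref s a) ->
  (forall p, List.In p Pi -> is_policy p) ->
  (forall p, List.In p Pi -> forall a, measurable_fun setT (fun s => p s a)) ->
  (forall p, List.In p Pi -> forall s a,
      0 < p s a /\ `|ln (p s a / piref s a)| <= Rmax / beta) ->
  conv_pol Pi pi -> goodp piref (Rmax / beta) pi.
Proof.
move=> pos pol mP bP [n [lam [p [l0 l1 inP ->]]]].
split.
- move=> s; rewrite exchange_big /= -[RHS]l1; apply: eq_bigr => i _.
  by rewrite -mulr_sumr; have [_ ->] := pol _ (inP i) s; rewrite mulr1.
- move=> s a /=.
  have bi : forall i, piref s a * expR (- (Rmax / beta)) <= p i s a <= piref s a * expR (Rmax / beta).
    by move=> i; have [h1 h2] := bP _ (inP i) s a; apply: pol_bounds.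
  apply/andP; split.
    rewrite -[X in X <= _]mul1r -l1 mulr_suml; apply: ler_sum => i _.
    by apply: ler_wpM2l => //; case/andP: (bi i).
  rewrite -[X in _ <= X]mul1r -l1 mulr_suml; apply: ler_sum => i _.
  by apply: ler_wpM2l => //; case/andP: (bi i).
- move=> a /=; apply: mSumI => i; apply: mM; [exact: mC | exact: mP (inP i) a].
Qed.

Lemma good_ln (piref pi : S -> A -> R) (m : R) s a :
  0 < piref s a -> goodp piref m pi ->
  0 < pi s a /\ `|ln (pi s a / piref s a)| <= m.
Proof.
move=> r0 [_ b _]; have /andP[l u] := b s a.
have em := expR_gt0 (- m).
have p0 : 0 < pi s a by apply: lt_le_trans l; rewrite mulr_gt0.
split => //.
have q0 : 0 < pi s a / piref s a by rewrite divr_gt0.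
rewrite ler_norml; apply/andP; split.
  rewrite -[X in X <= _](expRK (- m)) ler_ln ?posrE // ler_pdivlMr // mulrC //.
rewrite -[X in _ <= X](expRK m) ler_ln ?posrE ?expR_gt0 // ler_pdivrMr // mulrC //.
Qed.

Lemma good_bound (piref pi r : S -> A -> R) (beta Rmax : R) s :
  (forall s a, 0 < piref s a) -> 0 < beta ->
  (forall s a, 0 <= r s a <= Rmax) -> goodp piref (Rmax / beta) pi ->
  `| \sum_a pi s a * r s a - beta * KL pi piref s | <= Rmax + beta * (Rmax / beta).
Proof.
move=> pos b0 rb g.
have gl := fun a : A => @good_ln piref pi (Rmax / beta) s a (pos s a) g.
have [s1 _ _] := g.
have h1 : `|\sum_a pi s a * r s a| <= Rmax.
  apply: le_trans (ler_norm_sum _ _ _) _.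
  rewrite -[X in _ <= X]mul1r -(s1 s) mulr_suml; apply: ler_sum => a _.
  have [p0 _] := gl a; have /andP[r0 rM] := rb s a.
  by rewrite normrM (ger0_norm (ltW p0)) (ger0_norm r0); apply: ler_wpM2l => //; exact: ltW.
have h2 : `|KL pi piref s| <= Rmax / beta.
  rewrite /KL; apply: le_trans (ler_norm_sum _ _ _) _.
  rewrite -[X in _ <= X]mul1r -(s1 s) mulr_suml; apply: ler_sum => a _.
  have [p0 l] := gl a.
  by rewrite normrM (ger0_norm (ltW p0)); apply: ler_wpM2l => //; exact: ltW.
apply: le_trans (ler_normB _ _) _; apply: lerD => //.
by rewrite normrM (ger0_norm (ltW b0)); apply: ler_wpM2l => //; exact: ltW.
Qed.

Lemma good_ratio (piref p q : S -> A -> R) (m : R) s a :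
  0 < piref s a -> goodp piref m p -> goodp piref m q ->
  p s a / q s a <= expR (m + m).
Proof.
move=> r0 gp gq.
have [q0 _] := @good_ln piref q m s a r0 gq.
have [_ bp _] := gp; have [_ bq _] := gq.
have /andP[_ pu] := bp s a; have /andP[ql _] := bq s a.
rewrite ler_pdivrMr // expRD.
have E0 := expR_gt0 m.
have k : expR m * expR m * (piref s a * expR (- m)) = piref s a * expR m.
  by rewrite expRN; field; rewrite gt_eqF.
have : expR m * expR m * (piref s a * expR (- m)) <= expR m * expR m * q s a.
  by apply: ler_wpM2l => //; rewrite mulr_ge0 // ltW.
lra.
Qed.
End G.

Theorem lemma3p1 (R : realType) (d : measure_display) (S : measurableType d)
  (A : finType) (rho : probability S R) (piref : S -> A -> R)
  (beta Rmax : R) (rstar : S -> A -> R) (Pi : seq (S -> A -> R))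
  (W : nat) (rw : 'I_W -> S -> A -> R) :
  is_policy piref ->
  (forall s a, 0 < piref s a) ->
  (forall a, measurable_fun setT (fun s => piref s a)) ->
  0 < beta -> 0 < Rmax ->
  (forall s a, 0 <= rstar s a <= Rmax) ->
  (forall a, measurable_fun setT (fun s => rstar s a)) ->
  (forall pi, List.In pi Pi -> is_policy pi) ->
  (forall pi, List.In pi Pi -> forall a, measurable_fun setT (fun s => pi s a)) ->
  List.In (pistar piref beta rstar) Pi ->
  (forall pi, List.In pi Pi -> forall s a,
      0 < pi s a /\ `|ln (pi s a / piref s a)| <= Rmax / beta) ->
  (forall w s a, 0 <= rw w s a <= Rmax) ->
  (forall w a, measurable_fun setT (fun s => rw w s a)) ->
  forall pi : S -> A -> R,
    (conv_pol Pi pi \/ exists w, pi = pistar piref beta (rw w)) ->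
    (Cov rho (pistar piref beta rstar) pi <=
      1%:E + (kappa (expR (2 * Rmax / beta)) / beta)%:E *
        (Jbeta rho rstar piref beta (pistar piref beta rstar)
         - Jbeta rho rstar piref beta pi))%E.
Proof.
move=> pol pos mref b0 R0 rb mr polP mP inPs bP rwb mrw pi hpi.
have gs : goodp piref (Rmax / beta) (pistar piref beta rstar) := @good_pistar R d S A piref rstar beta Rmax pol pos mref b0 rb mr.
have gp : goodp piref (Rmax / beta) pi.
  case: hpi => [hc | [w ->]]; first exact: (@good_conv R d S A piref beta Rmax Pi pi pos polP mP bP hc).
  exact: (@good_pistar R d S A piref (rw w) beta Rmax pol pos mref b0 (rwb w) (mrw w)).
set ps := pistar piref beta rstar in gs *.
set x := expR (2 * Rmax / beta).
have e2 : 2 * Rmax / beta = Rmax / beta + Rmax / beta by ring.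
have x1 : 1 < x by rewrite /x -expR0 ltr_expR divr_gt0 // mulr_gt0.
have gpos : forall p, goodp piref (Rmax / beta) p -> forall s a, 0 < p s a.
  by move=> p gq s a; have [] := @good_ln R d S A piref p (Rmax / beta) s a (pos s a) gq.
have gmf : forall p, goodp piref (Rmax / beta) p -> forall a, mfn (fun s => p s a).
  by move=> p [].
have mKL : forall p, goodp piref (Rmax / beta) p -> mfn (fun s => KL p piref s).
  move=> p gq; rewrite /KL; apply: mSum => a; apply: mM; first exact: gmf.
  apply: mLn; apply: mM; first exact: gmf.
  apply: mInv; [exact: mref | by move=> s; exact: pos].
have mJ : forall p, goodp piref (Rmax / beta) p ->
    mfn (fun s => \sum_a p s a * rstar s a - beta * KL p piref s).
  move=> p gq; apply: mB; last by apply: mM; [exact: mC | exact: mKL].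
  by apply: mSum => a; apply: mM; [exact: gmf | exact: mr].
rewrite /Cov /Jbeta.
apply: (@int_combine R d S rho _ _ _ (kappa x / beta) (Rmax + beta * (Rmax / beta))).
- apply: mSum => a; apply: mM; first exact: (gmf _ gs).
  apply: mM; first exact: (gmf _ gs).
  by apply: mInv; [exact: (gmf _ gp) | move=> s; exact: (gpos _ gp)].
- exact: mJ.
- exact: mJ.
- by move=> s; apply: good_bound.
- by move=> s; apply: good_bound.
- by rewrite divr_ge0 // ?kappa_ge0 // ltW.
- move=> s; apply: sumr_ge0 => a _; apply: mulr_ge0; first exact/ltW/(gpos _ gs).
  by apply: divr_ge0; apply/ltW; [exact: (gpos _ gs) | exact: (gpos _ gp)].
- move=> s.
  have /andP[Z1 _] := @Z_bounds R d S A piref rstar beta Rmax s pol pos b0 rb.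
  have [qs _ _] := gp; have [pss _ _] := gs.
  have Z0 : 0 < \sum_a piref s a * expR (rstar s a / beta) by exact: lt_le_trans ltr01 Z1.
  exact: (@state_ineq R A (ps s) (pi s) (piref s) (rstar s) beta
            (\sum_a piref s a * expR (rstar s a / beta)) x b0 Z0 x1
            (fun a => gpos _ gp s a) (fun a => pos s a) (qs s) (pss s)
            (fun a => erefl)
            (fun a => ltac:(rewrite /x e2; exact: (@good_ratio R d S A piref ps pi (Rmax / beta) s a (pos s a) gs gp)))).
Qed.
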